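(* Let $\Sigma,\Gamma$ be finite alphabets, each with at least two letters. For every infinite word $w\in\Sigma^{\mathbb{N}}$, $$\mathrm{ACE}_{\mathcal{I}}(w) = \sup_{h\in\mathcal{I}}\Big(\limsup_{n\to\infty}\sup\{\mathrm{E}(h(f)) : f\in\mathrm{Fact}_n(w)\}\Big).$$
   Context: $\mathrm{Fact}_n(w)$ is the set of length-$n$ factors of $w$. For a nonempty word $v$ and integer $p\ge0$, $v^{p/|v|}$ is the prefix of length $p$ of $vvv\cdots$. For a nonempty finite word $u$, $\mathrm{E}(u) = \sup\{ r \in \mathbb{Q} : u = v^r \text{ for some nonempty } v\}$. For an infinite word $w$, $\mathrm{ACE}(w) = \limsup_{n\to\infty}\sup\{\mathrm{E}(u) : u\in\mathrm{Fact}_n(w)\}$. $\mathcal{I}$ is the set of injective morphisms $\Sigma^*\to\Gamma^*$ and $\mathrm{ACE}_{\mathcal{I}}(w) = \sup\{\mathrm{ACE}(h(w)) : h\in\mathcal{I}\}$. *)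

(* Defs.v *)
From HB Require Import structures.
From mathcomp Require Import all_boot all_order all_algebra.
From mathcomp Require Import all_classical all_reals.
From mathcomp Require Import ereal topology normedtype sequences.
Set Implicit Arguments. Unset Strict Implicit. Unset Printing Implicit Defensive.
Import Order.TTheory GRing.Theory Num.Theory.
Local Open Scope classical_set_scope.
Local Open Scope ring_scope.

Definition hstar (Sigma Gamma : finType) (h : Sigma -> seq Gamma)
  (u : seq Sigma) : seq Gamma := flatten (map h u).

Definition inj_morph (Sigma Gamma : finType) (h : Sigma -> seq Gamma) : Prop :=
  injective (hstar h).

Definition Fact (A : Type) (n : nat) (x : nat -> A) : set (seq A) :=
  [set u | exists i : nat, u = mkseq (fun k => x (i + k)%N) n].

(* v^(p/|v|) : prefix of length p of v v v ... *)
Definition fpow (A : Type) (v : seq A) (p : nat) : seq A :=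
  take p (flatten (nseq p v)).

Definition is_pow (A : Type) (u v : seq A) (r : rat) : Prop :=
  (0 < size v)%N /\ exists p : nat, r = (p%:R / (size v)%:R)%R /\ u = fpow v p.

Definition Eexp (R : realType) (A : Type) (u : seq A) : \bar R :=
  ereal_sup [set ((ratr r : R)%:E) | r in [set r : rat | exists v, is_pow u v r]].

Definition ACE (R : realType) (A : Type) (x : nat -> A) : \bar R :=
  limn_esup (fun n => ereal_sup [set Eexp R u | u in Fact n x]).

Definition pref (A : Type) (m : nat) (w : nat -> A) : seq A := mkseq w m.

(* x is the infinite word h(w): every h(w[0..m)) is a prefix of x.
   (For nonerasing h, in particular injective h, this determines x uniquely.) *)
Definition is_morph_image (Sigma Gamma : finType) (h : Sigma -> seq Gamma)
  (w : nat -> Sigma) (x : nat -> Gamma) : Prop :=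
  forall m i, (i < size (hstar h (pref m w)))%N ->
    nth (x i) (hstar h (pref m w)) i = x i.

Definition ACE_I (R : realType) (Sigma Gamma : finType) (w : nat -> Sigma) : \bar R :=
  ereal_sup [set ACE R x | x in
    [set x : nat -> Gamma | exists h : Sigma -> seq Gamma,
        inj_morph h /\ is_morph_image h w x]].

(* Main.v *)
Require Import Defs.
From mathcomp Require Import all_boot all_order all_algebra.
From mathcomp Require Import all_classical all_reals.
From mathcomp Require Import ereal topology normedtype sequences.
From mathcomp Require Import zify.
Import Order.TTheory GRing.Theory Num.Theory.
Set Implicit Arguments. Unset Strict Implicit. Unset Printing Implicit Defensive.
Local Open Scope classical_set_scope.
Local Open Scope ring_scope.

Lemma size_flatten_nseq (A : Type) (v : seq A) p :
  size (flatten (nseq p v)) = (p * size v)%N.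
Proof. by elim: p => //= p IH; rewrite size_cat IH mulSn. Qed.

Lemma nth_flatten_nseq (A : Type) (d : A) (v : seq A) p t :
  (t < p * size v)%N -> nth d (flatten (nseq p v)) t = nth d v (t %% size v).
Proof.
elim: p t => [|p IH] t; first by rewrite mul0n.
rewrite mulSn /= nth_cat => ht.
case: ifP => htv; first by rewrite modn_small.
have hq : (size v <= t)%N by rewrite leqNgt htv.
rewrite IH; last by lia.
by rewrite -{2}(subnK hq) modnDr.
Qed.

Lemma size_fpow (A : Type) (v : seq A) p : (0 < size v)%N -> size (fpow v p) = p.
Proof.
move=> hv; rewrite /fpow size_takel // size_flatten_nseq.
by rewrite -{1}(muln1 p) leq_mul2l hv orbT.
Qed.

Lemma nth_fpow (A : Type) (d : A) (v : seq A) p t : (0 < size v)%N -> (t < p)%N ->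
  nth d (fpow v p) t = nth d v (t %% size v).
Proof.
move=> hv ht; rewrite /fpow nth_take // nth_flatten_nseq //.
apply: (leq_trans ht); by rewrite -{1}(muln1 p) leq_mul2l hv orbT.
Qed.

Lemma period_mod (A : Type) (d : A) (y : seq A) q :
  (0 < q)%N -> (forall t, (t + q < size y)%N -> nth d y t = nth d y (t + q)) ->
  forall t, (t < size y)%N -> nth d y t = nth d y (t %% q).
Proof.
move=> hq hp t; elim/ltn_ind: t => t IH hty.
case: (ltnP t q) => htq; first by rewrite modn_small.
have -> : t = ((t - q) + q)%N by lia.
rewrite -hp; last by lia.
rewrite modnDr IH //; lia.
Qed.

Lemma Eexp_ub (A : Type) (u v : seq A) (r : rat) : is_pow u v r ->
  exists q, [/\ (0 < q)%N, r = (size u)%:R / q%:R &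
    forall d t, (t + q < size u)%N -> nth d u t = nth d u (t + q)].
Proof.
case=> hv [p [-> hu]]; exists (size v); split => //.
  by rewrite hu size_fpow.
move=> d t; rewrite hu size_fpow // => ht.
rewrite !nth_fpow //; last by lia.
by rewrite modnDr.
Qed.

Lemma Eexp_lb (R : realType) (A : Type) (y : seq A) q : (0 < q)%N -> (0 < size y)%N ->
  (forall d t, (t + q < size y)%N -> nth d y t = nth d y (t + q)) ->
  (((size y)%:R / q%:R : R)%:E <= Eexp R y)%E.
Proof.
move=> hq hy hp.
have [d _] : exists d : A, True by case: y hy {hp} => // a _ _; exists a.
case: (ltnP (size y) q) => hyq.
  apply: (@le_trans _ _ ((ratr (1 : rat) : R)%:E)).
    rewrite rmorph1 lee_fin ler_pdivrMr ?ltr0n // mul1r ler_nat; lia.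
  apply: ereal_sup_ubound; exists 1%R => //; exists y; split => //.
  exists (size y); split; first by rewrite divff // pnatr_eq0 -lt0n.
  apply: (@eq_from_nth _ d); first by rewrite size_fpow.
  by move=> t ht; rewrite nth_fpow // modn_small.
have -> : ((size y)%:R / q%:R : R) = ratr ((size y)%:R / q%:R : rat).
  by rewrite fmorph_div !rmorph_nat.
apply: ereal_sup_ubound; exists ((size y)%:R / q%:R)%R => //; exists (take q y).
have hs : size (take q y) = q by rewrite size_takel.
split; first by rewrite hs.
exists (size y); split; first by rewrite hs.
apply: (@eq_from_nth _ d); first by rewrite size_fpow // hs.
move=> t ht; rewrite nth_fpow ?hs //.
by rewrite nth_take ?ltn_mod // (period_mod hq (hp d)).
Qed.
From mathcomp Require Import lra.
Local Close Scope ereal_scope.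

Lemma hstar_cat (S G : finType) (h : S -> seq G) s1 s2 :
  hstar h (s1 ++ s2) = hstar h s1 ++ hstar h s2.
Proof. by rewrite /hstar map_cat flatten_cat. Qed.

Definition fct (S : Type) (w : nat -> S) i n := mkseq (fun k => w (i + k)%N) n.

Lemma pref_add (S : Type) (w : nat -> S) i n :
  pref (i + n) w = pref i w ++ fct w i n.
Proof.
rewrite /pref /fct /mkseq iotaD map_cat add0n; congr (_ ++ _).
by rewrite -{1}(addn0 i) iotaDl -map_comp.
Qed.

Lemma size_hstar_ge (S G : finType) (h : S -> seq G) s :
  (forall a, 0 < size (h a))%N -> (size s <= size (hstar h s))%N.
Proof.
move=> hne; elim: s => //= a s IH.
rewrite /hstar /= size_cat -/(hstar h s).
have := hne a; lia.
Qed.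

Definition cmax (S G : finType) (h : S -> seq G) := (\max_(a : S) size (h a))%N.

Lemma size_hstar_le (S G : finType) (h : S -> seq G) s :
  (size (hstar h s) <= cmax h * size s)%N.
Proof.
elim: s => [|a s IH]; first by rewrite /hstar /= muln0.
rewrite /hstar /= size_cat -/(hstar h s) mulnS.
by apply: leq_add => //; apply: leq_bigmax.
Qed.

Definition Pw (S G : finType) (h : S -> seq G) (w : nat -> S) i :=
  size (hstar h (pref i w)).

Lemma Pw_add (S G : finType) (h : S -> seq G) (w : nat -> S) i n :
  Pw h w (i + n) = (Pw h w i + size (hstar h (fct w i n)))%N.
Proof. by rewrite /Pw pref_add hstar_cat size_cat. Qed.

Lemma Pw_S (S G : finType) (h : S -> seq G) (w : nat -> S) i :
  Pw h w i.+1 = (Pw h w i + size (h (w i)))%N.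
Proof.
rewrite -addn1 Pw_add /fct /mkseq /= /hstar /= cats0 addn0 //.
Qed.

Lemma Pw_block (S G : finType) (h : S -> seq G) (w : nat -> S) :
  (forall a, 0 < size (h a))%N ->
  forall j, exists i, (Pw h w i <= j < Pw h w i.+1)%N.
Proof.
move=> hne; elim=> [|j [i /andP[h1 h2]]].
  by exists 0%N; rewrite Pw_S /Pw /pref /= /hstar /= add0n hne.
case: (ltnP j.+1 (Pw h w i.+1)) => h3.
  by exists i; rewrite h3 andbT; lia.
exists i.+1; rewrite h3 /= Pw_S; have := hne (w i.+1); lia.
Qed.

Lemma Pw_mono (S G : finType) (h : S -> seq G) (w : nat -> S) i k :
  (i <= k)%N -> (Pw h w i <= Pw h w k)%N.
Proof. by move=> hik; rewrite -(subnKC hik) Pw_add leq_addr. Qed.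

Lemma morph_pref (S G : finType) (h : S -> seq G) (w : nat -> S) (x : nat -> G) i :
  is_morph_image h w x -> hstar h (pref i w) = mkseq x (Pw h w i).
Proof.
move=> hx; case E: (hstar h (pref i w)) => [|a s]; first by rewrite /Pw E.
apply: (@eq_from_nth _ a); first by rewrite size_mkseq /Pw E.
move=> t ht; rewrite nth_mkseq; last by rewrite /Pw E.
have ht' : (t < size (hstar h (pref i w)))%N by rewrite E.
by rewrite -E (set_nth_default (x t) _ ht') hx.
Qed.

Lemma morph_fct (S G : finType) (h : S -> seq G) (w : nat -> S) (x : nat -> G) i n :
  is_morph_image h w x ->
  hstar h (fct w i n) = mkseq (fun k => x (Pw h w i + k)%N) (size (hstar h (fct w i n))).
Proof.
move=> hx; have E := morph_pref i hx; have E2 := morph_pref (i + n) hx.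
rewrite pref_add hstar_cat E Pw_add in E2.
set f := hstar h (fct w i n) in E2 *.
case Ef: f => [|a s] //.
apply: (@eq_from_nth _ a); first by rewrite size_mkseq.
move=> t ht; rewrite nth_mkseq // -Ef.
have := congr1 (fun s => nth a s (Pw h w i + t)) E2 => /=.
rewrite nth_cat size_mkseq ltnNge leq_addr /= addKn => ->.
by rewrite nth_mkseq // ltn_add2l Ef.
Qed.

Lemma size_h_le (S G : finType) (h : S -> seq G) a : (size (h a) <= cmax h)%N.
Proof. exact: leq_bigmax. Qed.

Lemma w_cover (S G : finType) (h : S -> seq G) (w : nat -> S) j m :
  (forall a, 0 < size (h a))%N -> (2 * cmax h <= m)%N ->
  exists i n, [/\ (j <= Pw h w i)%N,
    (Pw h w i + size (hstar h (fct w i n)) <= j + m)%N &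
    (m - 2 * cmax h <= size (hstar h (fct w i n)))%N].
Proof.
move=> hne hm.
have [i1 /andP[a1 a2]] := Pw_block w hne j.
have [k /andP[b1 b2]] := Pw_block w hne (j + m).
have e1 := Pw_S h w i1; have e2 := Pw_S h w k.
have c1 := size_h_le h (w i1); have c2 := size_h_le h (w k).
have hik : (i1.+1 <= k)%N.
  rewrite leqNgt; apply/negP => hk.
  have := Pw_mono h w hk; lia.
exists i1.+1, (k - i1.+1)%N.
have := Pw_add h w i1.+1 (k - i1.+1); rewrite subnKC // => e3.
split; lia.
Qed.
Local Close Scope ereal_scope.

Lemma w_arith (R : realType) (l e M C Q Lr Nr : R) : 0 <= l -> 0 < e -> 1 <= Q ->
  Lr / Q < l + e / 2 -> M - 2 * C <= Lr -> Nr <= M ->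
  2 * C * e + 4 * C * (l + e) < Nr * e -> 0 <= C -> M / Q <= l + e.
Proof.
move=> l0 e0 Q1 hL hM hN hNr C0.
have Q0 : 0 < Q by lra.
rewrite ler_pdivrMr //.
move: hL; rewrite ltr_pdivrMr // => hL.
rewrite leNgt; apply/negP => hc.
have h1 : Q * e < 4 * C by nra.
have h2 : M * e - 2 * C * e < Q * e * (l + e / 2) by nra.
have h3 : Q * e * (l + e / 2) <= 4 * C * (l + e / 2) by nra.
nra.
Qed.

Local Open Scope ereal_scope.

Lemma limn_esup_inf (R : realType) (u : (\bar R)^nat) :
  limn_esup u = ereal_inf (range (esups u)).
Proof. by rewrite limn_esup_lim; apply: cvg_lim => //; exact: cvg_esups_inf. Qed.

Definition gseq (R : realType) (S G : finType) (h : S -> seq G) (w : nat -> S) :=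
  fun n => ereal_sup [set Eexp R (hstar h f) | f in Fact n w].
Definition aseq (R : realType) (G : finType) (x : nat -> G) :=
  fun n => ereal_sup [set Eexp R u | u in Fact n x].

Lemma w_le1 (R : realType) (S G : finType) (h : S -> seq G) (w : nat -> S) (x : nat -> G) :
  (forall a, 0 < size (h a))%N -> is_morph_image h w x ->
  ereal_inf (range (esups (gseq R h w))) <= ereal_inf (range (esups (aseq R x))).
Proof.
move=> hne hx; apply: le_ereal_inf_tmp => _ [n _ <-].
apply: (@le_trans _ _ (esups (gseq R h w) n)).
  by apply: ereal_inf_lbound; exists n.
apply: ge_ereal_sup => _ [k /= hk <-].
apply: ge_ereal_sup => _ [f [i ->] <-].
have hf := morph_fct i k hx.
apply: (@le_trans _ _ (aseq R x (size (hstar h (fct w i k))))).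
  apply: ereal_sup_ubound; exists (hstar h (fct w i k)) => //.
  by exists (Pw h w i).
apply: ereal_sup_ubound; exists (size (hstar h (fct w i k))) => //=.
apply: (leq_trans hk); apply: (leq_trans _ (size_hstar_ge _ hne)).
by rewrite /fct size_mkseq.
Qed.
Local Close Scope ereal_scope.
Local Open Scope ereal_scope.

Lemma w_ge0 (R : realType) (S G : finType) (h : S -> seq G) (w : nat -> S) :
  (forall a, 0 < size (h a))%N ->
  0 <= ereal_inf (range (esups (gseq R h w))).
Proof.
move=> hne; apply: le_ereal_inf_tmp => _ [n _ <-].
set y := hstar h (fct w 0 n.+1).
have hy : (0 < size y)%N.
  by apply: leq_trans (size_hstar_ge _ hne); rewrite /fct size_mkseq.
apply: (@le_trans _ _ (Eexp R y)).
  apply: le_trans (Eexp_lb R hy hy _) => //.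
  move=> d t ht; lia.
apply: (@le_trans _ _ (gseq R h w n.+1)).
  by apply: ereal_sup_ubound; exists (fct w 0 n.+1) => //; exists 0%N.
by apply: ereal_sup_ubound; exists n.+1 => //=.
Qed.

Lemma w_le2 (R : realType) (S G : finType) (h : S -> seq G) (w : nat -> S) (x : nat -> G) (l : R) :
  (forall a, 0 < size (h a))%N -> is_morph_image h w x ->
  ereal_inf (range (esups (gseq R h w))) = l%:E ->
  ereal_inf (range (esups (aseq R x))) <= l%:E.
Proof.
move=> hne hx El.
have l0 : (0 <= l)%R by rewrite -lee_fin -El w_ge0.
apply/lee_addgt0Pr => e e0.
have : ereal_inf (range (esups (gseq R h w))) < (l + e / 2)%:E.
  by rewrite El lte_fin; lra.
move/ereal_inf_lt => [_ [n0 _ <-] hn0].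
set c := cmax h.
have c1 : (1 <= c)%N by apply: leq_trans (hne (w 0%N)) (size_h_le h (w 0%N)).
set B := ((2 * c%:R * e + 4 * c%:R * (l + e)) / e)%R.
have B0 : (0 <= B)%R by rewrite /B divr_ge0 //; [|lra]; apply: addr_ge0; apply: mulr_ge0 => //; lra.
have hB := archi_boundP B0.
set K := Num.Def.archi_bound B in hB.
set N := (K + c * n0 + 2 * c + 1)%N.
apply: (@le_trans _ _ (esups (aseq R x) N)); first by apply: ereal_inf_lbound; exists N.
apply: ge_ereal_sup => _ [m /= hm <-].
apply: ge_ereal_sup => _ [u [j ->] <-].
apply: ge_ereal_sup => _ [r [v hv] <-].
have [q [hq -> hper]] := Eexp_ub hv.
rewrite size_mkseq in hper *.
have hm2 : (2 * c <= m)%N by rewrite /N in hm; lia.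
have [i [n [hj hle hL]]] := w_cover w j hne hm2.
set y := hstar h (fct w i n) in hle hL.
have ey : y = mkseq (fun k => x (Pw h w i + k)%N) (size y) := morph_fct i n hx.
have hpy : forall d t, (t + q < size y)%N -> nth d y t = nth d y (t + q).
  move=> d t ht; rewrite ey !nth_mkseq; try lia.
  have := hper d (Pw h w i - j + t)%N; rewrite !nth_mkseq; try lia.
  have -> : (j + (Pw h w i - j + t) = Pw h w i + t)%N by lia.
  have -> : (j + (Pw h w i - j + t + q) = Pw h w i + (t + q))%N by lia.
  apply; lia.
have hyn : (0 < size y)%N by lia.
have hE := Eexp_lb R hq hyn hpy.
have hn : (n0 <= n)%N.
  have h1 := size_hstar_le h (fct w i n); rewrite /fct size_mkseq -/(fct w i n) -/y in h1.
  rewrite -(leq_pmul2l c1); lia.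
have hg : Eexp R y <= esups (gseq R h w) n0.
  apply: (@le_trans _ _ (gseq R h w n)).
    by apply: ereal_sup_ubound; exists (fct w i n) => //; exists i.
  by apply: ereal_sup_ubound; exists n.
have := le_lt_trans (le_trans hE hg) hn0; rewrite lte_fin => hLq.
rewrite fmorph_div !rmorph_nat -EFinD lee_fin.
apply: (@w_arith R l e m%:R c%:R q%:R (size y)%:R N%:R) => //.
- by rewrite ler1n.
- have : (m <= size y + 2 * c)%N by lia.
  rewrite -(ler_nat R) natrD natrM => ?; lra.
- by rewrite ler_nat.
- have hKN : (K%:R <= N%:R :> R)%R by rewrite ler_nat /N; lia.
  move: hB; rewrite /B ltr_pdivrMr // => hB.
  apply: (lt_le_trans hB); rewrite ler_pM2r //.
Qed.
Local Close Scope ereal_scope.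
Local Open Scope ereal_scope.

Lemma w_ace_eq (R : realType) (S G : finType) (h : S -> seq G) (w : nat -> S) (x : nat -> G) :
  (forall a, 0 < size (h a))%N -> is_morph_image h w x ->
  ACE R x = limn_esup (fun n => ereal_sup [set Eexp R (hstar h f) | f in Fact n w]).
Proof.
move=> hne hx.
rewrite /ACE (_ : (fun n => ereal_sup [set Eexp R (hstar h f) | f in Fact n w]) = gseq R h w) //.
rewrite -/(aseq R x) !limn_esup_inf.
apply/eqP; rewrite eq_le w_le1 // andbT.
case E: (ereal_inf (range (esups (gseq R h w)))) => [l| |].
- exact: w_le2 E.
- exact: leey.
- by have := w_ge0 R w hne; rewrite E.
Qed.

Lemma w_nonerasing (S G : finType) (h : S -> seq G) :
  inj_morph h -> forall a, (0 < size (h a))%N.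
Proof.
move=> hi a; rewrite lt0n size_eq0; apply/eqP => ha.
have : hstar h [:: a] = hstar h [::] by rewrite /hstar /= ha.
by move/hi.
Qed.

Lemma w_pref_nth (S G : finType) (h : S -> seq G) (w : nat -> S) (d : G) a b i :
  (a <= b)%N -> (i < size (hstar h (pref a w)))%N ->
  nth d (hstar h (pref a w)) i = nth d (hstar h (pref b w)) i.
Proof.
move=> hab hi; rewrite -(subnKC hab) pref_add hstar_cat nth_cat hi //.
Qed.

Lemma w_exists_image (S G : finType) (h : S -> seq G) (w : nat -> S) :
  (forall a, 0 < size (h a))%N -> exists x, is_morph_image h w x.
Proof.
move=> hne; have := hne (w 0%N); case E: (h (w 0%N)) => [|d s] // _.
exists (fun i => nth d (hstar h (pref i.+1 w)) i) => m i hi.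
have hi1 : (i < size (hstar h (pref i.+1 w)))%N.
  by apply: leq_trans (size_hstar_ge _ hne); rewrite /pref size_mkseq.
rewrite (@w_pref_nth _ _ h w _ _ _ _ (leq_maxl m i.+1) hi).
rewrite (@w_pref_nth _ _ h w d _ _ _ (leq_maxr m i.+1) hi1).
apply: set_nth_default.
apply: (leq_trans hi1); apply: leq_trans (Pw_mono h w (leq_maxr m i.+1)).
by [].
Qed.

Theorem theorem19 (R : realType) (Sigma Gamma : finType)
    (hSigma : (1 < #|Sigma|)%N) (hGamma : (1 < #|Gamma|)%N) (w : nat -> Sigma) :
  ACE_I R Gamma w =
  ereal_sup [set limn_esup
                (fun n => ereal_sup [set Eexp R (hstar h f) | f in Fact n w])
             | h in [set h : Sigma -> seq Gamma | inj_morph h]].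
Proof.
rewrite /ACE_I; congr ereal_sup; apply/seteqP; split.
- move=> _ [x [h [hi hx]] <-]; exists h => //.
  by rewrite (w_ace_eq R (w_nonerasing hi) hx).
- move=> _ [h hi <-]; have [x hx] := w_exists_image w (w_nonerasing hi).
  exists x; first by exists h.
  by rewrite (w_ace_eq R (w_nonerasing hi) hx).
Qed.
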